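(* Suppose for each $0\le t\le N-1$ a bias function $h^e_t$ for the cost $f_t+g_t$ exists, and let $\{x^*_t\}_{t=0}^N$ be the optimal state trajectory of the offline problem with optimal cost $J^*$. Then $$\sum_{t=0}^{N-1}\lambda^e_t-J^*\le\sum_{t=1}^N\big(h^e_{t-1}(x^*_t)-h^e_t(x^*_t)\big)-h^e_0(x_0)=\sum_{t=0}^N\big(h^e_{t-1}(x^*_t)-h^e_t(x^*_t)\big),$$ where $h^e_N:=f_N$, $h^e_{-1}:\equiv0$ and $x^*_0:=x_0$.
   Context: Dynamics $x_{t+1}=Ax_t+Bu_t$ with given $x_0$; cost $J=\sum_{t=0}^{N-1}[f_t(x_t)+g_t(u_t)]+f_N(x_N)$ with $f_t$ strongly convex and smooth, $g_t$ convex and smooth. For each $t$, the optimal steady state is $(x^e_t,u^e_t)=\arg\min\{f_t(x)+g_t(u):x=Ax+Bu\}$ and $\lambda^e_t=f_t(x^e_t)+g_t(u^e_t)$. A bias function for $f_t+g_t$ is a function $h^e_t:\mathbb R^n\to\mathbb R$ with $h^e_t(x)+\lambda^e_t=\min_u\big(f_t(x)+g_t(u)+h^e_t(Ax+Bu)\big)$ for all $x$. *)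

(* Defs.v *)
From HB Require Import structures.
From mathcomp Require Import all_boot all_order all_algebra.
Set Implicit Arguments. Unset Strict Implicit. Unset Printing Implicit Defensive.
Import Order.TTheory GRing.Theory Num.Theory.
Local Open Scope ring_scope.

Section Defs.
Variable R : rcfType.

Definition dotv k (x y : 'cV[R]_k) : R := \sum_(i < k) x i 0 * y i 0.
Definition sqnorm k (x : 'cV[R]_k) : R := dotv x x.
Definition normv k (x : 'cV[R]_k) : R := Num.sqrt (sqnorm x).

Definition has_gradient k (f : 'cV[R]_k -> R) (df : 'cV[R]_k -> 'cV[R]_k) :=
  forall x eps, 0 < eps -> exists2 d, 0 < d &
    forall y, normv (y - x) < d ->
      `|f y - f x - dotv (df x) (y - x)| <= eps * normv (y - x).

Definition smooth k (f : 'cV[R]_k -> R) :=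
  exists df, has_gradient f df /\
    exists L, forall x y, normv (df x - df y) <= L * normv (x - y).

Definition convex k (f : 'cV[R]_k -> R) :=
  forall x y (th : R), 0 <= th <= 1 ->
    f (th *: x + (1 - th) *: y) <= th * f x + (1 - th) * f y.

Definition strongly_convex k (f : 'cV[R]_k -> R) :=
  exists2 mu : R, 0 < mu & forall x y (th : R), 0 <= th <= 1 ->
    f (th *: x + (1 - th) *: y) <=
      th * f x + (1 - th) * f y - mu / 2%:R * th * (1 - th) * sqnorm (x - y).

Definition feasible n m (A : 'M[R]_n) (B : 'M[R]_(n, m)) (N : nat)
  (x0 : 'cV[R]_n) (x : nat -> 'cV[R]_n) (u : nat -> 'cV[R]_m) :=
  x 0%N = x0 /\ forall t, (t < N)%N -> x t.+1 = A *m x t + B *m u t.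

Definition cost n m (N : nat) (f : nat -> 'cV[R]_n -> R) (g : nat -> 'cV[R]_m -> R)
  (x : nat -> 'cV[R]_n) (u : nat -> 'cV[R]_m) : R :=
  \sum_(t < N) (f t (x t) + g t (u t)) + f N (x N).

Definition offline_optimal n m (A : 'M[R]_n) (B : 'M[R]_(n, m)) (N : nat)
  (x0 : 'cV[R]_n) f g (xs : nat -> 'cV[R]_n) (us : nat -> 'cV[R]_m) :=
  feasible A B N x0 xs us /\
  forall x u, feasible A B N x0 x u -> cost N f g xs us <= cost N f g x u.

Definition optimal_steady_state n m (A : 'M[R]_n) (B : 'M[R]_(n, m))
  (ft : 'cV[R]_n -> R) (gt : 'cV[R]_m -> R) (xe : 'cV[R]_n) (ue : 'cV[R]_m) :=
  xe = A *m xe + B *m ue /\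
  forall x u, x = A *m x + B *m u -> ft xe + gt ue <= ft x + gt u.

(* h is a bias function for ft + gt with constant lam:
   h x + lam = min_u (ft x + gt u + h (A x + B u)) for all x
   (the minimum is attained). *)
Definition bias_function n m (A : 'M[R]_n) (B : 'M[R]_(n, m))
  (ft : 'cV[R]_n -> R) (gt : 'cV[R]_m -> R) (lam : R) (h : 'cV[R]_n -> R) :=
  forall x,
    (forall u, h x + lam <= ft x + gt u + h (A *m x + B *m u)) /\
    exists u, h x + lam = ft x + gt u + h (A *m x + B *m u).

(* hext h f N t = h^e_t, with the convention h^e_N := f_N. *)
Definition hext n (N : nat) (h : nat -> 'cV[R]_n -> R) (f : nat -> 'cV[R]_n -> R)
  (t : nat) : 'cV[R]_n -> R := if t == N then f N else h t.

(* hprev h f N t = h^e_{t-1}, with h^e_{-1} :== 0 and h^e_N := f_N. *)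
Definition hprev n (N : nat) (h : nat -> 'cV[R]_n -> R) (f : nat -> 'cV[R]_n -> R)
  (t : nat) : 'cV[R]_n -> R :=
  match t with 0%N => fun _ => 0 | s.+1 => hext N h f s end.

End Defs.

(* Main.v *)
Require Import Defs.
From HB Require Import structures.
From mathcomp Require Import all_boot all_order all_algebra.
Import Order.TTheory GRing.Theory Num.Theory.
From mathcomp Require Import ring.
Local Open Scope ring_scope.

Theorem lemma3 (R : rcfType) (n m N : nat)
  (hN : (0 < N)%N)
  (A : 'M[R]_n) (B : 'M[R]_(n, m)) (x0 : 'cV[R]_n)
  (f : nat -> 'cV[R]_n -> R) (g : nat -> 'cV[R]_m -> R)
  (hf_sc : forall t, (t <= N)%N -> strongly_convex (f t))
  (hf_sm : forall t, (t <= N)%N -> smooth (f t))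
  (hg_cv : forall t, (t < N)%N -> convex (g t))
  (hg_sm : forall t, (t < N)%N -> smooth (g t))
  (xe : nat -> 'cV[R]_n) (ue : nat -> 'cV[R]_m)
  (hss : forall t, (t < N)%N -> optimal_steady_state A B (f t) (g t) (xe t) (ue t))
  (h : nat -> 'cV[R]_n -> R)
  (hbias : forall t, (t < N)%N ->
     bias_function A B (f t) (g t) (f t (xe t) + g t (ue t)) (h t))
  (xs : nat -> 'cV[R]_n) (us : nat -> 'cV[R]_m)
  (hopt : offline_optimal A B N x0 f g xs us) :
  let lam := fun t => f t (xe t) + g t (ue t) in
  let Jstar := cost N f g xs us in
  let xs' := fun t : nat => if t == 0%N then x0 else xs t in
  \sum_(t < N) lam t - Jstar <=
    \sum_(1 <= t < N.+1) (hprev N h f t (xs t) - hext N h f t (xs t)) - h 0%N x0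
  /\
  \sum_(1 <= t < N.+1) (hprev N h f t (xs t) - hext N h f t (xs t)) - h 0%N x0
  = \sum_(0 <= t < N.+1) (hprev N h f t (xs' t) - hext N h f t (xs' t)).
Proof.
move=> lam Jstar xs'.
case: hopt => [[hx0 hdyn] _].
have hextlt : forall t, (t < N)%N -> hext N h f t = h t.
  by move=> t tN; rewrite /hext (ltn_eqF tN).
have hextN : hext N h f N = f N by rewrite /hext eqxx.
set H := fun t => hext N h f t (xs t).
have tel : \sum_(i < N) H (val i).+1 + h 0%N x0 = \sum_(i < N) h i (xs i) + f N (xs N).
  have e1 := big_ord_recl N (fun i : 'I_N.+1 => H (val i)).
  have e2 := big_ord_recr N (fun i : 'I_N.+1 => H (val i)).
  rewrite /= in e1 e2.
  have H0 : H 0%N = h 0%N x0 by rewrite /H hextlt // hx0.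
  have HN : H N = f N (xs N) by rewrite /H hextN.
  rewrite H0 in e1; rewrite HN in e2.
  have -> : \sum_(i < N) h i (xs i) = \sum_(i < N) H i.
    by apply: eq_bigr => i _; rewrite /H hextlt.
  rewrite addrC -e2 e1.
  congr (_ + _); apply: eq_bigr => i _; by [].
have Hrhs : \sum_(1 <= t < N.+1) (hprev N h f t (xs t) - hext N h f t (xs t)) =
   \sum_(i < N) (h i (xs i.+1) - H (val i).+1).
  rewrite big_add1 /= big_mkord; apply: eq_bigr => i _.
  by rewrite /= hextlt.
split.
  rewrite Hrhs sumrB.
  have key : \sum_(t < N) lam t <=
     \sum_(t < N) (f t (xs t) + g t (us t) + h t (xs t.+1) - h t (xs t)).
    apply: ler_sum => i _.
    have [hle _] := hbias i (ltn_ord i) (xs i).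
    have := hle (us i); rewrite -hdyn //.
    rewrite /lam => hh; rewrite lerBrDr addrC; exact: hh.
  have eqJ : Jstar = \sum_(t < N) (f t (xs t) + g t (us t)) + f N (xs N) by [].
  apply: le_trans (_ : \sum_(t < N) (f t (xs t) + g t (us t) + h t (xs t.+1) - h t (xs t)) - Jstar <= _).
    by rewrite lerD2r.
  rewrite eqJ.
  have e : \sum_(t < N) (f t (xs t) + g t (us t) + h t (xs t.+1) - h t (xs t)) =
     \sum_(t < N) (f t (xs t) + g t (us t)) + \sum_(t<N) h t (xs t.+1) - \sum_(t<N) h t (xs t).
    by rewrite sumrB big_split.
  rewrite e.
  have e3 : \sum_(i < N) H (val i).+1 = \sum_(i < N) h i (xs i) + f N (xs N) - h 0%N x0.
    by rewrite -tel addrK.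
  rewrite e3; rewrite /=.
  set a := \sum_(t < N) (f t (xs t) + g t (us t)).
  set b := \sum_(t < N) h t (xs t.+1).
  set c := \sum_(t < N) h t (xs t).
  rewrite le_eqVlt; apply/orP; left; apply/eqP.
  ring.
rewrite [RHS]big_ltn // /xs' /= hextlt // sub0r addrC.
congr (_ + _).
by apply: eq_big_nat => i /andP[hi _]; rewrite -(prednK hi).
Qed.
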